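(* In the setting described in the context, one has identically on $M$: $$\overline{\mathcal K}(H_0)=-2\,\overline{\mathcal L}_1(\bar k)\,H_0 .$$
   Context: Let $M\subset\mathbb C^3$ be a real-analytic real hypersurface, considered locally near a point, represented in holomorphic coordinates $(z_1,z_2,w)$, $w=u+iv$, as a graph $u=F(z_1,z_2,\bar z_1,\bar z_2,v)$; $(z_1,z_2,\bar z_1,\bar z_2,v)$ are coordinates on $M$. Bars denote complex conjugation. Put $A^j:=-iF_{z_j}/(1+iF_v)$ ($j=1,2$), $\mathcal L_j:=\partial_{z_j}+A^j\partial_v$, with conjugates $\overline{\mathcal L}_j$. Let $\ell:=i(\mathcal L_1(\overline{A^1})-\overline{\mathcal L}_1(A^1))$, assumed nowhere zero. Assume the Levi form of $M$ has constant rank $1$, let $k:=-(\mathcal L_2(\overline{A^1})-\overline{\mathcal L}_1(A^2))/(\mathcal L_1(\overline{A^1})-\overline{\mathcal L}_1(A^1))$, $\mathcal K:=k\mathcal L_1+\mathcal L_2$, $\overline{\mathcal K}=\bar k\overline{\mathcal L}_1+\overline{\mathcal L}_2$. Assume 2-nondegeneracy: $\overline{\mathcal L}_1(k)$ vanishes nowhere. Let $P:=(\ell_{z_1}+A^1\ell_v-\ell A^1_v)/\ell$ and $$H_0:=-\tfrac16\tfrac{\overline{\mathcal L}_1(\overline{\mathcal L}_1(\overline{\mathcal L}_1(k)))}{\overline{\mathcal L}_1(k)}+\tfrac29\tfrac{\overline{\mathcal L}_1(\overline{\mathcal L}_1(k))^2}{\overline{\mathcal L}_1(k)^2}+\tfrac1{18}\tfrac{\overline{\mathcal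 L}_1(\overline{\mathcal L}_1(k))\,\overline P}{\overline{\mathcal L}_1(k)}+\tfrac16\overline{\mathcal L}_1(\overline P)-\tfrac19\overline P^{\,2}.$$ *)

(* Defs.v *)
From Stdlib Require Import Reals List.
From Coquelicot Require Import Coquelicot.
Open Scope R_scope.

(** Points of M in the coordinates (z1, z2, zbar1, zbar2, v), written with
    real coordinates z1 = x1 + i y1, z2 = x2 + i y2, and v. *)
Record pt := mkpt { px1 : R; py1 : R; px2 : R; py2 : R; pv : R }.

Definition coord (i : nat) (p : pt) : R :=
  match i with 0%nat => px1 p | 1%nat => py1 p | 2%nat => px2 p
             | 3%nat => py2 p | _ => pv p end.

Definition upd (i : nat) (p : pt) (t : R) : pt :=
  match i with
  | 0%nat => mkpt t (py1 p) (px2 p) (py2 p) (pv p)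
  | 1%nat => mkpt (px1 p) t (px2 p) (py2 p) (pv p)
  | 2%nat => mkpt (px1 p) (py1 p) t (py2 p) (pv p)
  | 3%nat => mkpt (px1 p) (py1 p) (px2 p) t (pv p)
  | _ => mkpt (px1 p) (py1 p) (px2 p) (py2 p) t
  end.

Definition dist_pt (p q : pt) : R :=
  Rmax (Rabs (px1 p - px1 q)) (Rmax (Rabs (py1 p - py1 q))
   (Rmax (Rabs (px2 p - px2 q)) (Rmax (Rabs (py2 p - py2 q)) (Rabs (pv p - pv q))))).

Definition is_open (U : pt -> Prop) : Prop :=
  forall p, U p -> exists r, 0 < r /\ forall q, dist_pt p q < r -> U q.

Definition pdR (i : nat) (f : pt -> R) : pt -> R :=
  fun p => Derive (fun t => f (upd i p t)) (coord i p).

Fixpoint iter_pdR (ds : list nat) (f : pt -> R) : pt -> R :=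
  match ds with nil => f | i :: ds' => pdR i (iter_pdR ds' f) end.

Definition continuous_at_pt (g : pt -> R) (p : pt) : Prop :=
  forall eps, 0 < eps -> exists del, 0 < del /\
    forall q, dist_pt p q < del -> Rabs (g q - g p) < eps.

(** C^infinity on U: all iterated partial derivatives exist and are continuous
    on U. (Implied by real-analyticity; included for convenience.) *)
Definition smooth_on (f : pt -> R) (U : pt -> Prop) : Prop :=
  forall ds p, U p ->
    continuous_at_pt (iter_pdR ds f) p /\
    forall i, (i < 5)%nat -> ex_derive (fun t => iter_pdR ds f (upd i p t)) (coord i p).

Definition boxsum (N : nat) (g : nat -> nat -> nat -> nat -> nat -> R) : R :=
  sum_f_R0 (fun a => sum_f_R0 (fun b => sum_f_R0 (fun c => sum_f_R0 (fun d =>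
    sum_f_R0 (fun e => g a b c d e) N) N) N) N) N.

Definition real_analytic_on (f : pt -> R) (U : pt -> Prop) : Prop :=
  forall p, U p -> exists r (a : nat -> nat -> nat -> nat -> nat -> R), 0 < r /\
    (exists B, forall N,
        boxsum N (fun i j k l m => Rabs (a i j k l m) * r ^ (i + j + k + l + m)) <= B) /\
    forall q, dist_pt p q < r ->
      Un_cv (fun N => boxsum N (fun i j k l m =>
               a i j k l m * (px1 q - px1 p) ^ i * (py1 q - py1 p) ^ j *
               (px2 q - px2 p) ^ k * (py2 q - py2 p) ^ l * (pv q - pv p) ^ m))
            (f q).

Definition cfun := pt -> C.

Definition pdC (i : nat) (f : cfun) : cfun :=
  fun p => (pdR i (fun q => fst (f q)) p, pdR i (fun q => snd (f q)) p).

Local Open Scope C_scope.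

Definition dz1 (f : cfun) : cfun := fun p => (pdC 0 f p - Ci * pdC 1 f p) / 2.
Definition dz2 (f : cfun) : cfun := fun p => (pdC 2 f p - Ci * pdC 3 f p) / 2.
Definition dzb1 (f : cfun) : cfun := fun p => (pdC 0 f p + Ci * pdC 1 f p) / 2.
Definition dzb2 (f : cfun) : cfun := fun p => (pdC 2 f p + Ci * pdC 3 f p) / 2.
Definition dv (f : cfun) : cfun := pdC 4 f.

Definition cconj (f : cfun) : cfun := fun p => Cconj (f p).

Section Setting.
Variable F : pt -> R.
Definition Fc : cfun := fun p => RtoC (F p).

Definition A1 : cfun := fun p => - Ci * dz1 Fc p / (1 + Ci * dv Fc p).
Definition A2 : cfun := fun p => - Ci * dz2 Fc p / (1 + Ci * dv Fc p).

Definition L1 (g : cfun) : cfun := fun p => dz1 g p + A1 p * dv g p.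
Definition L2 (g : cfun) : cfun := fun p => dz2 g p + A2 p * dv g p.
Definition Lb1 (g : cfun) : cfun := fun p => dzb1 g p + Cconj (A1 p) * dv g p.
Definition Lb2 (g : cfun) : cfun := fun p => dzb2 g p + Cconj (A2 p) * dv g p.

Definition ell : cfun := fun p => Ci * (L1 (cconj A1) p - Lb1 A1 p).

Definition h11 : cfun := ell.
Definition h12 : cfun := fun p => Ci * (L1 (cconj A2) p - Lb2 A1 p).
Definition h21 : cfun := fun p => Ci * (L2 (cconj A1) p - Lb1 A2 p).
Definition h22 : cfun := fun p => Ci * (L2 (cconj A2) p - Lb2 A2 p).

Definition levi_rank1_at (p : pt) : Prop :=
  (h11 p <> 0 \/ h12 p <> 0 \/ h21 p <> 0 \/ h22 p <> 0) /\
  h11 p * h22 p - h12 p * h21 p = 0.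

Definition kk : cfun := fun p =>
  - (L2 (cconj A1) p - Lb1 A2 p) / (L1 (cconj A1) p - Lb1 A1 p).

Definition Kb (g : cfun) : cfun := fun p => Cconj (kk p) * Lb1 g p + Lb2 g p.

Definition PP : cfun := fun p =>
  (dz1 ell p + A1 p * dv ell p - ell p * dv A1 p) / ell p.
Definition Pb : cfun := cconj PP.

Definition Lb1k : cfun := Lb1 kk.
Definition Lb1Lb1k : cfun := Lb1 Lb1k.
Definition Lb1Lb1Lb1k : cfun := Lb1 Lb1Lb1k.

Definition H0 : cfun := fun p =>
  - (1/6) * (Lb1Lb1Lb1k p / Lb1k p)
  + (2/9) * ((Lb1Lb1k p * Lb1Lb1k p) / (Lb1k p * Lb1k p))
  + (1/18) * (Lb1Lb1k p * Pb p / Lb1k p)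
  + (1/6) * Lb1 Pb p
  - (1/9) * (Pb p * Pb p).
End Setting.

(* Main.v *)
Require Import Defs.
From Stdlib Require Import Reals Lra Lia FunctionalExtensionality.
From Coquelicot Require Import Coquelicot.
Import Defs.
Open Scope R_scope.

Lemma coord_upd i p s : coord i (upd i p s) = s.
Proof. destruct i as [|[|[|[|[|]]]]]; reflexivity. Qed.

Lemma coord_upd_ne i j p s : (i < 5)%nat -> (j < 5)%nat -> i <> j ->
  coord j (upd i p s) = coord j p.
Proof. intros Hi Hj Hij.
  destruct i as [|[|[|[|[|i]]]]]; destruct j as [|[|[|[|[|j]]]]];
  try lia; reflexivity. Qed.

Lemma upd_upd i p s t : upd i (upd i p s) t = upd i p t.
Proof. destruct i as [|[|[|[|[|]]]]]; reflexivity. Qed.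

Lemma upd_comm i j p s t : (i < 5)%nat -> (j < 5)%nat -> i <> j ->
  upd i (upd j p t) s = upd j (upd i p s) t.
Proof. intros Hi Hj Hij.
  destruct i as [|[|[|[|[|i]]]]]; destruct j as [|[|[|[|[|j]]]]];
  try lia; reflexivity. Qed.

Lemma upd_coord i p : upd i p (coord i p) = p.
Proof. destruct p; destruct i as [|[|[|[|[|]]]]]; reflexivity. Qed.

Lemma Rabs_self0 x : Rabs (x - x) = 0.
Proof. unfold Rminus; rewrite Rplus_opp_r; apply Rabs_R0. Qed.

Lemma dist_upd p i t r : 0 < r -> Rabs (t - coord i p) < r -> dist_pt p (upd i p t) < r.
Proof. intros Hr Ht. rewrite Rabs_minus_sym in Ht.
  unfold dist_pt; destruct i as [|[|[|[|[|i]]]]]; simpl in *;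
  repeat apply Rmax_lub_lt; try rewrite Rabs_self0; auto. Qed.

Lemma dist_upd2 p i j u v r : (i < 5)%nat -> (j < 5)%nat -> 0 < r ->
  Rabs (u - coord i p) < r -> Rabs (v - coord j p) < r ->
  dist_pt p (upd j (upd i p u) v) < r.
Proof. intros Hi Hj Hr Hu Hv. rewrite Rabs_minus_sym in Hu. rewrite Rabs_minus_sym in Hv.
  unfold dist_pt; destruct i as [|[|[|[|[|i]]]]]; destruct j as [|[|[|[|[|j]]]]]; try lia;
  simpl in *; repeat apply Rmax_lub_lt; rewrite ?Rabs_self0; auto. Qed.

Definition EqU (U : pt -> Prop) (f g : pt -> R) := forall p, U p -> f p = g p.

Lemma near_line U p i : is_open U -> U p -> locally (coord i p) (fun t => U (upd i p t)).
Proof. intros HU Hp. destruct (HU p Hp) as [r [Hr H]].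
  exists (mkposreal r Hr). intros t Ht. apply H. apply dist_upd; auto. Qed.

Lemma pdR_ext U i f g : is_open U -> EqU U f g -> EqU U (pdR i f) (pdR i g).
Proof. intros HU H p Hp. unfold pdR. apply Derive_ext_loc.
  eapply filter_imp; [|apply (near_line U p i HU Hp)]. intros t Ht. apply H; auto. Qed.

Lemma exd_ext U i f g p : is_open U -> EqU U f g -> U p ->
  ex_derive (fun t => f (upd i p t)) (coord i p) -> ex_derive (fun t => g (upd i p t)) (coord i p).
Proof. intros HU H Hp. apply ex_derive_ext_loc.
  eapply filter_imp; [|apply (near_line U p i HU Hp)]. intros t Ht. apply H; auto. Qed.

Lemma cont_ext U f g p : is_open U -> EqU U f g -> U p ->
  continuous_at_pt f p -> continuous_at_pt g p.
Proof. intros HU H Hp Hc eps He. destruct (Hc eps He) as [d [Hd Hq]].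
  destruct (HU p Hp) as [r [Hr Hr']].
  exists (Rmin d r). split. apply Rmin_pos; auto.
  intros q Hq'. rewrite <- (H q), <- (H p); auto.
  apply Hq. eapply Rlt_le_trans; [exact Hq'|apply Rmin_l].
  apply Hr'. eapply Rlt_le_trans; [exact Hq'|apply Rmin_r]. Qed.

Lemma cont_comp2 (phi : R -> R -> R) f g p :
  continuous_at_pt f p -> continuous_at_pt g p -> continuity_2d_pt phi (f p) (g p) ->
  continuous_at_pt (fun q => phi (f q) (g q)) p.
Proof. intros Hf Hg Hphi eps He.
  destruct (Hphi (mkposreal eps He)) as [d Hd].
  destruct (Hf d (cond_pos d)) as [d1 [Hd1 H1]].
  destruct (Hg d (cond_pos d)) as [d2 [Hd2 H2]].
  exists (Rmin d1 d2). split. apply Rmin_pos; auto.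
  intros q Hq. apply Hd.
  apply H1. eapply Rlt_le_trans; [exact Hq|apply Rmin_l].
  apply H2. eapply Rlt_le_trans; [exact Hq|apply Rmin_r]. Qed.

Lemma cont_const c p : continuous_at_pt (fun _ => c) p.
Proof. intros eps He. exists 1. split. lra. intros. rewrite Rabs_self0. auto. Qed.

Lemma cont_plus f g p : continuous_at_pt f p -> continuous_at_pt g p ->
  continuous_at_pt (fun q => f q + g q) p.
Proof. intros Hf Hg. apply (cont_comp2 (fun u v => u + v)); auto.
  apply continuity_2d_pt_plus. apply continuity_2d_pt_id1. apply continuity_2d_pt_id2. Qed.

Lemma cont_mult f g p : continuous_at_pt f p -> continuous_at_pt g p ->
  continuous_at_pt (fun q => f q * g q) p.
Proof. intros Hf Hg. apply (cont_comp2 (fun u v => u * v)); auto.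
  apply continuity_2d_pt_mult. apply continuity_2d_pt_id1. apply continuity_2d_pt_id2. Qed.

Lemma cont_inv f p : continuous_at_pt f p -> f p <> 0 ->
  continuous_at_pt (fun q => / f q) p.
Proof. intros Hf Hn. apply (cont_comp2 (fun u v => / u) f f); auto.
  apply continuity_2d_pt_inv. apply continuity_2d_pt_id1. auto. Qed.

Fixpoint Sn (U : pt -> Prop) (n : nat) (f : pt -> R) : Prop :=
  match n with
  | O => forall p, U p -> continuous_at_pt f p
  | S n => (forall p, U p -> continuous_at_pt f p) /\
           (forall i p, (i < 5)%nat -> U p -> ex_derive (fun t => f (upd i p t)) (coord i p)) /\
           (forall i, (i < 5)%nat -> Sn U n (pdR i f))
  end.

Definition Smooth U f := forall n, Sn U n f.

Lemma Sn_cont U n f : Sn U n f -> forall p, U p -> continuous_at_pt f p.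
Proof. destruct n; simpl; tauto. Qed.

Lemma Sn_mono U n f : Sn U (S n) f -> Sn U n f.
Proof. revert f; induction n; intros f H; simpl in *.
  - tauto.
  - destruct H as [H1 [H2 H3]]. repeat split; auto. Qed.

Lemma Sn_ext U n f g : is_open U -> EqU U f g -> Sn U n f -> Sn U n g.
Proof. intro HU. revert f g; induction n; intros f g He H; simpl in *.
  - intros p Hp. eapply cont_ext; eauto.
  - destruct H as [H1 [H2 H3]]. repeat split.
    + intros p Hp. eapply cont_ext; eauto.
    + intros i p Hi Hp. eapply exd_ext; eauto.
    + intros i Hi. eapply IHn; [apply pdR_ext; eauto|auto]. Qed.

Lemma pdR_const i c : pdR i (fun _ => c) = fun _ => 0.
Proof. apply functional_extensionality; intro p. unfold pdR. apply Derive_const. Qed.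

Lemma Sn_const U n c : Sn U n (fun _ => c).
Proof. revert c; induction n; intros c; simpl.
  - intros; apply cont_const.
  - repeat split. intros; apply cont_const. intros; apply ex_derive_const.
    intros i Hi. rewrite pdR_const. apply IHn. Qed.

Lemma pdR_plus U i f g : (i < 5)%nat -> Sn U 1 f -> Sn U 1 g ->
  EqU U (pdR i (fun q => f q + g q)) (fun q => pdR i f q + pdR i g q).
Proof. intros Hi [_ [Hf _]] [_ [Hg _]] p Hp. unfold pdR.
  apply Derive_plus; auto. Qed.

Lemma pdR_mult U i f g : (i < 5)%nat -> Sn U 1 f -> Sn U 1 g ->
  EqU U (pdR i (fun q => f q * g q)) (fun q => pdR i f q * g q + f q * pdR i g q).
Proof. intros Hi [_ [Hf _]] [_ [Hg _]] p Hp. unfold pdR.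
  rewrite Derive_mult; auto. rewrite upd_coord. reflexivity. Qed.

Lemma pdR_inv U i f : (i < 5)%nat -> Sn U 1 f -> (forall p, U p -> f p <> 0) ->
  EqU U (pdR i (fun q => / f q)) (fun q => (-1) * pdR i f q * (/ f q * / f q)).
Proof. intros Hi [_ [Hf _]] Hn p Hp. unfold pdR.
  rewrite Derive_inv; auto. rewrite upd_coord. field. auto.
  rewrite upd_coord; auto. Qed.

Lemma Sn_plus U n : is_open U -> forall f g, Sn U n f -> Sn U n g -> Sn U n (fun q => f q + g q).
Proof. intro HU. induction n; intros f g Hf Hg; simpl in *.
  - intros; apply cont_plus; auto.
  - destruct Hf as [F1 [F2 F3]], Hg as [G1 [G2 G3]]. repeat split.
    + intros; apply cont_plus; auto.
    + intros i p Hi Hp; apply (ex_derive_plus (fun t => f (upd i p t)) (fun t => g (upd i p t))); auto.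
    + intros i Hi. apply Sn_ext with (f := fun q => pdR i f q + pdR i g q); [auto| |].
      intros p Hp; symmetry; apply (pdR_plus U i f g Hi); auto; simpl; repeat split; auto; intros; eapply Sn_cont; eauto.
      apply IHn; auto. Qed.

Lemma Sn_mult U n : is_open U -> forall f g, Sn U n f -> Sn U n g -> Sn U n (fun q => f q * g q).
Proof. intro HU. induction n; intros f g Hf Hg.
  - simpl in *. intros; apply cont_mult; auto.
  - assert (Hf' := Sn_mono _ _ _ Hf). assert (Hg' := Sn_mono _ _ _ Hg).
    simpl in Hf, Hg. destruct Hf as [F1 [F2 F3]], Hg as [G1 [G2 G3]]. simpl. repeat split.
    + intros; apply cont_mult; auto.
    + intros; apply ex_derive_mult; auto.
    + intros i Hi. apply Sn_ext with (f := fun q => pdR i f q * g q + f q * pdR i g q); [auto| |].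
      intros p Hp; symmetry; apply (pdR_mult U i f g Hi); auto; simpl; repeat split; auto; intros; eapply Sn_cont; eauto.
      apply Sn_plus; auto; apply IHn; auto. Qed.

Lemma Sn_inv U n : is_open U -> forall f, (forall p, U p -> f p <> 0) -> Sn U n f -> Sn U n (fun q => / f q).
Proof. intro HU. induction n; intros f Hn Hf.
  - simpl in *. intros; apply cont_inv; auto.
  - assert (Hf' := Sn_mono _ _ _ Hf).
    simpl in Hf. destruct Hf as [F1 [F2 F3]]. simpl. repeat split.
    + intros; apply cont_inv; auto.
    + intros; apply ex_derive_inv; auto. rewrite upd_coord; auto.
    + intros i Hi. apply Sn_ext with (f := fun q => (-1) * pdR i f q * (/ f q * / f q)); [auto| |].
      intros p Hp; symmetry; apply (pdR_inv U i f Hi); auto; simpl; repeat split; auto; intros; eapply Sn_cont; eauto.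
      apply Sn_mult; auto. apply Sn_mult; auto. apply Sn_const.
      apply Sn_mult; auto. Qed.

Lemma Smooth_const U c : Smooth U (fun _ => c).
Proof. intro; apply Sn_const. Qed.
Lemma Smooth_plus U f g : is_open U -> Smooth U f -> Smooth U g -> Smooth U (fun q => f q + g q).
Proof. intros; intro; apply Sn_plus; auto. Qed.
Lemma Smooth_mult U f g : is_open U -> Smooth U f -> Smooth U g -> Smooth U (fun q => f q * g q).
Proof. intros; intro; apply Sn_mult; auto. Qed.
Lemma Smooth_inv U f : is_open U -> (forall p, U p -> f p <> 0) -> Smooth U f -> Smooth U (fun q => / f q).
Proof. intros; intro; apply Sn_inv; auto. Qed.
Lemma Smooth_ext U f g : is_open U -> EqU U f g -> Smooth U f -> Smooth U g.
Proof. intros HU He H n. eapply Sn_ext; eauto. Qed.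
Lemma Smooth_pd U i f : (i < 5)%nat -> Smooth U f -> Smooth U (pdR i f).
Proof. intros Hi H n. destruct (H (S n)) as [_ [_ H3]]. apply H3; auto. Qed.
Lemma Smooth_opp U f : is_open U -> Smooth U f -> Smooth U (fun q => - f q).
Proof. intros HU H. apply Smooth_ext with (fun q => (-1) * f q); auto.
  intros p _; ring. apply Smooth_mult; auto. apply Smooth_const. Qed.
Lemma updA i j p u v z : (i < 5)%nat -> (j < 5)%nat -> i <> j ->
  upd i (upd j (upd i p u) v) z = upd j (upd i p z) v.
Proof. intros. rewrite upd_comm by auto. rewrite upd_upd. reflexivity. Qed.
Lemma coordB i j p u v : (i < 5)%nat -> (j < 5)%nat -> i <> j ->
  coord i (upd j (upd i p u) v) = u.
Proof. intros. rewrite coord_upd_ne by auto. apply coord_upd. Qed.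

Lemma cont2d_of (G : pt -> R) p i j : (i < 5)%nat -> (j < 5)%nat ->
  continuous_at_pt G p ->
  continuity_2d_pt (fun u v => G (upd j (upd i p u) v)) (coord i p) (coord j p).
Proof. intros Hi Hj Hc eps. destruct (Hc eps (cond_pos eps)) as [d [Hd H]].
  exists (mkposreal d Hd). intros u v Hu Hv. simpl in *.
  rewrite upd_coord, upd_coord. apply H. apply dist_upd2; auto. Qed.

Lemma Schwarz_R U f i j : is_open U -> Smooth U f -> (i < 5)%nat -> (j < 5)%nat ->
  EqU U (pdR i (pdR j f)) (pdR j (pdR i f)).
Proof. intros HU Hs Hi Hj p Hp.
  destruct (Nat.eq_dec i j) as [->|Hij]. reflexivity.
  set (phi := fun s t => f (upd j (upd i p s) t)).
  transitivity (Derive (fun s => Derive (fun t => phi s t) (coord j p)) (coord i p)).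
  { unfold pdR. apply Derive_ext; intro s. rewrite coord_upd_ne by auto. reflexivity. }
  transitivity (Derive (fun t => Derive (fun s => phi s t) (coord i p)) (coord j p)).
  2:{ unfold pdR. apply Derive_ext; intro t. rewrite coord_upd_ne by auto.
      apply Derive_ext; intro s. unfold phi. rewrite upd_comm by auto. reflexivity. }
  assert (S3 := Hs 3%nat). simpl in S3.
  destruct S3 as [_ [E0 S2]].
  assert (E1 : forall k, (k < 5)%nat -> forall l q, (l < 5)%nat -> U q ->
     ex_derive (fun t => pdR k f (upd l q t)) (coord l q)).
  { intros k Hk l q Hl Hq. destruct (S2 k Hk) as [_ [H _]]. auto. }
  assert (C2 : forall k l, (k < 5)%nat -> (l < 5)%nat -> continuous_at_pt (pdR l (pdR k f)) p).
  { intros k l Hk Hl. destruct (S2 k Hk) as [_ [_ H]]. destruct (H l Hl) as [H' _]. auto. }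
  apply Schwarz.
  - destruct (HU p Hp) as [r [Hr Hr']]. exists (mkposreal r Hr). intros u v Hu Hv. simpl in Hu, Hv.
    assert (Hq : U (upd j (upd i p u) v)) by (apply Hr'; apply dist_upd2; auto).
    repeat split.
    + apply ex_derive_ext with (fun z => f (upd i (upd j (upd i p u) v) z)).
      intro z. unfold phi. rewrite updA by auto. reflexivity.
      assert (H := E0 i _ Hi Hq). rewrite coordB in H by auto. exact H.
    + apply ex_derive_ext with (fun z => f (upd j (upd j (upd i p u) v) z)).
      intro z. unfold phi. rewrite upd_upd. reflexivity.
      assert (H := E0 j _ Hj Hq). rewrite coord_upd in H. exact H.
    + apply ex_derive_ext with (fun z => pdR j f (upd i (upd j (upd i p u) v) z)).
      intro z. unfold phi, pdR. rewrite updA by auto. rewrite coord_upd.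
      apply Derive_ext; intro t. rewrite upd_upd. reflexivity.
      assert (H := E1 j Hj i _ Hi Hq). rewrite coordB in H by auto. exact H.
    + apply ex_derive_ext with (fun z => pdR i f (upd j (upd j (upd i p u) v) z)).
      intro z. unfold phi, pdR. rewrite upd_upd. rewrite coordB by auto.
      apply Derive_ext; intro t. rewrite updA by auto. reflexivity.
      assert (H := E1 i Hi j _ Hj Hq). rewrite coord_upd in H. exact H.
  - eapply continuity_2d_pt_ext; [|apply (cont2d_of (pdR i (pdR j f)) p i j); auto].
    intros u v. simpl. unfold pdR. rewrite coordB by auto.
    apply Derive_ext; intro z. rewrite updA by auto. rewrite coord_upd.
    apply Derive_ext; intro t. unfold phi. rewrite upd_upd. reflexivity.
  - eapply continuity_2d_pt_ext; [|apply (cont2d_of (pdR j (pdR i f)) p i j); auto].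
    intros u v. simpl. unfold pdR. rewrite coord_upd.
    apply Derive_ext; intro z. rewrite upd_upd. rewrite coordB by auto.
    apply Derive_ext; intro t. unfold phi. rewrite updA by auto. reflexivity.
Qed.

Lemma iter_app ds i f : iter_pdR ds (pdR i f) = iter_pdR (ds ++ (i :: nil)) f.
Proof. induction ds; simpl; auto. rewrite IHds. reflexivity. Qed.

Lemma smooth_on_Smooth U f : smooth_on f U -> Smooth U f.
Proof. intros H n. revert f H. induction n; intros f H; simpl.
  - intros p Hp. apply (H nil p Hp).
  - repeat split.
    + intros p Hp. apply (H nil p Hp).
    + intros i p Hi Hp. apply (H nil p Hp); auto.
    + intros i Hi. apply IHn. intros ds p Hp. rewrite iter_app. apply H; auto.
Qed.
Open Scope C_scope.

Definition EqC (U : pt -> Prop) (g h : cfun) := forall p, U p -> g p = h p.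
Definition SmC U (g : cfun) := Smooth U (fun p => fst (g p)) /\ Smooth U (fun p => snd (g p)).

Lemma Smooth_minus U f g : is_open U -> Smooth U f -> Smooth U g -> Smooth U (fun q => (f q - g q)%R).
Proof. intros. apply Smooth_plus; auto. apply Smooth_opp; auto. Qed.

Lemma C_eq (a b : C) : fst a = fst b -> snd a = snd b -> a = b.
Proof. destruct a, b; simpl; intros; subst; auto. Qed.

Lemma pdC_ext U i (g h : cfun) : is_open U -> EqC U g h -> EqC U (pdC i g) (pdC i h).
Proof. intros HU H p Hp. unfold pdC. f_equal; apply (pdR_ext U); auto; intros q Hq; rewrite H; auto. Qed.

Lemma SmC_ext U (g h : cfun) : is_open U -> EqC U g h -> SmC U g -> SmC U h.
Proof. intros HU H [H1 H2]. split; [apply Smooth_ext with (fun p => fst (g p))|apply Smooth_ext with (fun p => snd (g p))]; auto; intros q Hq; simpl; rewrite H; auto. Qed.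

Lemma SmC_const U c : SmC U (fun _ => c).
Proof. split; apply Smooth_const. Qed.

Lemma SmC_plus U (g h : cfun) : is_open U -> SmC U g -> SmC U h -> SmC U (fun p => g p + h p).
Proof. intros HU [G1 G2] [H1 H2]. split; simpl; apply Smooth_plus; auto. Qed.

Lemma SmC_mult U (g h : cfun) : is_open U -> SmC U g -> SmC U h -> SmC U (fun p => g p * h p).
Proof. intros HU [G1 G2] [H1 H2]. split; simpl.
  apply Smooth_minus; auto; apply Smooth_mult; auto.
  apply Smooth_plus; auto; apply Smooth_mult; auto. Qed.

Lemma SmC_opp U (g : cfun) : is_open U -> SmC U g -> SmC U (fun p => - g p).
Proof. intros HU [G1 G2]. split; simpl; apply Smooth_opp; auto. Qed.

Lemma SmC_minus U (g h : cfun) : is_open U -> SmC U g -> SmC U h -> SmC U (fun p => g p - h p).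
Proof. intros. apply SmC_plus; auto. apply SmC_opp; auto. Qed.

Lemma SmC_conj U (g : cfun) : is_open U -> SmC U g -> SmC U (cconj g).
Proof. intros HU [G1 G2]. split; simpl; auto. apply Smooth_opp; auto. Qed.

Lemma normsq_nz (z : C) : z <> 0 -> (fst z * fst z + snd z * snd z)%R <> 0%R.
Proof. destruct z as [a b]; simpl; intros Hz H. apply Hz.
  assert (a = 0%R) by nra. assert (b = 0%R) by nra. subst. reflexivity. Qed.

Lemma SmC_inv U (g : cfun) : is_open U -> (forall p, U p -> g p <> 0) -> SmC U g -> SmC U (fun p => / g p).
Proof. intros HU Hn [G1 G2].
  assert (D : Smooth U (fun p => / (fst (g p) * fst (g p) + snd (g p) * snd (g p)))%R).
  { apply Smooth_inv; auto. intros p Hp; apply normsq_nz; auto.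
    apply Smooth_plus; auto; apply Smooth_mult; auto. }
  split.
  - apply Smooth_ext with (fun p => fst (g p) * / (fst (g p) * fst (g p) + snd (g p) * snd (g p)))%R; auto.
    intros p Hp. simpl. unfold Rdiv. f_equal. f_equal. ring.
    apply Smooth_mult; auto.
  - apply Smooth_ext with (fun p => - snd (g p) * / (fst (g p) * fst (g p) + snd (g p) * snd (g p)))%R; auto.
    intros p Hp. simpl. unfold Rdiv. f_equal. f_equal. ring.
    apply Smooth_mult; auto. apply Smooth_opp; auto. Qed.

Lemma SmC_div U (g h : cfun) : is_open U -> (forall p, U p -> h p <> 0) -> SmC U g -> SmC U h -> SmC U (fun p => g p / h p).
Proof. intros. apply SmC_mult; auto. apply SmC_inv; auto. Qed.

Lemma SmC_pdC U i (g : cfun) : (i < 5)%nat -> SmC U g -> SmC U (pdC i g).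
Proof. intros Hi [G1 G2]. split; simpl; apply Smooth_pd; auto. Qed.

Lemma exR_opp (f : R -> R) x : ex_derive f x -> ex_derive (fun t => (- f t)%R) x.
Proof. intro H. apply (ex_derive_opp f x H). Qed.
Lemma exR_plus (f g : R -> R) x : ex_derive f x -> ex_derive g x -> ex_derive (fun t => (f t + g t)%R) x.
Proof. intros H1 H2. apply (ex_derive_plus f g x H1 H2). Qed.
Lemma exR_mult (f g : R -> R) x : ex_derive f x -> ex_derive g x -> ex_derive (fun t => (f t * g t)%R) x.
Proof. intros H1 H2. apply (ex_derive_mult f g x H1 H2). Qed.

Lemma exd_of U f i p : Smooth U f -> (i < 5)%nat -> U p -> ex_derive (fun t => f (upd i p t)) (coord i p).
Proof. intros H Hi Hp. destruct (H 1%nat) as [_ [H2 _]]. auto. Qed.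

Lemma pdC_const i c : pdC i (fun _ => c) = fun _ => 0.
Proof. apply functional_extensionality; intro p. unfold pdC. rewrite !pdR_const. reflexivity. Qed.

Lemma pdC_conj i g : pdC i (cconj g) = cconj (pdC i g).
Proof. apply functional_extensionality; intro p. unfold pdC, cconj, pdR. cbn [fst snd Cplus Cmult Copp Cminus Cconj cconj].
  rewrite Derive_opp. reflexivity. Qed.

Lemma pdC_plus U i (g h : cfun) : (i < 5)%nat -> SmC U g -> SmC U h ->
  EqC U (pdC i (fun p => g p + h p)) (fun p => pdC i g p + pdC i h p).
Proof. intros Hi [G1 G2] [H1 H2] p Hp. unfold pdC, pdR. cbn [fst snd Cplus Cmult Copp Cminus Cconj cconj].
  assert (e1 := exd_of U _ i p G1 Hi Hp). assert (e2 := exd_of U _ i p G2 Hi Hp).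
  assert (e3 := exd_of U _ i p H1 Hi Hp). assert (e4 := exd_of U _ i p H2 Hi Hp). cbv beta in e1, e2, e3, e4.
  rewrite Derive_plus by auto. rewrite Derive_plus by auto. reflexivity. Qed.

Lemma pdC_opp U i (g : cfun) :
  EqC U (pdC i (fun p => - g p)) (fun p => - pdC i g p).
Proof. intros p Hp. unfold pdC, pdR. cbn [fst snd Cplus Cmult Copp Cminus Cconj cconj].
  rewrite Derive_opp. rewrite Derive_opp. reflexivity. Qed.

Lemma pdC_mult U i (g h : cfun) : (i < 5)%nat -> SmC U g -> SmC U h ->
  EqC U (pdC i (fun p => g p * h p)) (fun p => pdC i g p * h p + g p * pdC i h p).
Proof. intros Hi [G1 G2] [H1 H2] p Hp. unfold pdC, pdR. cbn [fst snd Cplus Cmult Copp Cminus Cconj cconj].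
  assert (e1 := exd_of U _ i p G1 Hi Hp). assert (e2 := exd_of U _ i p G2 Hi Hp).
  assert (e3 := exd_of U _ i p H1 Hi Hp). assert (e4 := exd_of U _ i p H2 Hi Hp). cbv beta in e1, e2, e3, e4.
  unfold Rminus.
  rewrite Derive_plus. rewrite Derive_opp. rewrite Derive_mult by auto. rewrite Derive_mult by auto.
  rewrite Derive_plus. rewrite Derive_mult by auto. rewrite Derive_mult by auto.
  rewrite !upd_coord. apply C_eq; cbn [fst snd Cplus Cmult Copp Cminus]; ring.
  apply exR_mult; auto. apply exR_mult; auto.
  apply exR_mult; auto. apply exR_opp. apply exR_mult; auto. Qed.
Lemma pdC_comm U i j (g : cfun) : is_open U -> SmC U g -> (i < 5)%nat -> (j < 5)%nat ->
  EqC U (pdC i (pdC j g)) (pdC j (pdC i g)).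
Proof. intros HU [G1 G2] Hi Hj p Hp. unfold pdC at 1 3. cbn [fst snd].
  unfold pdC. cbn [fst snd]. f_equal; [exact (Schwarz_R U _ i j HU G1 Hi Hj p Hp)|exact (Schwarz_R U _ i j HU G2 Hi Hj p Hp)]. Qed.

Lemma pdC_inv U i (g : cfun) : is_open U -> (i < 5)%nat -> (forall p, U p -> g p <> 0) -> SmC U g ->
  EqC U (pdC i (fun p => / g p)) (fun p => - pdC i g p * (/ g p * / g p)).
Proof. intros HU Hi Hn Hg p Hp.
  assert (Hgi : SmC U (fun p => / g p)) by (apply SmC_inv; auto).
  assert (E : EqC U (fun p => g p * / g p) (fun _ => 1)).
  { intros q Hq. field. auto. }
  assert (E2 := pdC_ext U i _ _ HU E p Hp). rewrite pdC_const in E2.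
  rewrite (pdC_mult U i g (fun p => / g p) Hi Hg Hgi p Hp) in E2.
  assert (Hz := Hn p Hp).
  apply (f_equal (fun z => z * / g p)) in E2.
  replace (pdC i (fun p => / g p) p) with
   ((pdC i g p * / g p + g p * pdC i (fun p0 : pt => / g p0) p) * / g p - pdC i g p * (/ g p * / g p)).
  rewrite E2. ring. field. auto. Qed.

Lemma pdC_zero U i (g : cfun) : is_open U -> EqC U g (fun _ => 0) -> EqC U (pdC i g) (fun _ => 0).
Proof. intros HU H p Hp. rewrite (pdC_ext U i g (fun _ => 0) HU H p Hp). rewrite pdC_const. reflexivity. Qed.

Definition Vf (a : nat -> cfun) (g : cfun) : cfun := fun p =>
  a 0%nat p * pdC 0 g p + a 1%nat p * pdC 1 g p + a 2%nat p * pdC 2 g p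
  + a 3%nat p * pdC 3 g p + a 4%nat p * pdC 4 g p.

Definition SmCf U (a : nat -> cfun) := forall i, (i < 5)%nat -> SmC U (a i).

Lemma SmC_Vf U a g : is_open U -> SmCf U a -> SmC U g -> SmC U (Vf a g).
Proof. intros HU Ha Hg. unfold Vf.
  repeat apply SmC_plus; auto; apply SmC_mult; auto; try (apply Ha; lia); try (apply SmC_pdC; auto; lia). Qed.

Lemma Vf_ext U a g h : is_open U -> EqC U g h -> EqC U (Vf a g) (Vf a h).
Proof. intros HU H p Hp. unfold Vf. rewrite !(pdC_ext U _ g h HU H p Hp). reflexivity. Qed.

Lemma Vf_const a c : Vf a (fun _ => c) = fun _ => 0.
Proof. apply functional_extensionality; intro p. unfold Vf. rewrite !pdC_const. ring. Qed.

Lemma Vf_zero U a g : is_open U -> EqC U g (fun _ => 0) -> EqC U (Vf a g) (fun _ => 0).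
Proof. intros HU H p Hp. rewrite (Vf_ext U a g _ HU H p Hp). rewrite Vf_const. reflexivity. Qed.

Lemma Vf_plus U a (g h : cfun) : SmC U g -> SmC U h ->
  EqC U (Vf a (fun p => g p + h p)) (fun p => Vf a g p + Vf a h p).
Proof. intros Hg Hh p Hp. unfold Vf.
  rewrite !(pdC_plus U _ g h) by (auto; lia). ring. Qed.

Lemma pdC_minus U i (g h : cfun) : is_open U -> (i < 5)%nat -> SmC U g -> SmC U h ->
  EqC U (pdC i (fun p => g p - h p)) (fun p => pdC i g p - pdC i h p).
Proof. intros HU Hi Hg Hh p Hp.
  change (pdC i (fun p => g p + - h p) p = pdC i g p + - pdC i h p).
  rewrite (pdC_plus U i g (fun p => - h p)); auto. rewrite (pdC_opp U i h p Hp). reflexivity.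
  apply SmC_opp; auto. Qed.

Lemma Vf_minus U a (g h : cfun) : is_open U -> SmC U g -> SmC U h ->
  EqC U (Vf a (fun p => g p - h p)) (fun p => Vf a g p - Vf a h p).
Proof. intros HU Hg Hh p Hp. unfold Vf.
  rewrite !(pdC_minus U _ g h) by (auto; lia). ring. Qed.

Lemma Vf_opp U a (g : cfun) :
  EqC U (Vf a (fun p => - g p)) (fun p => - Vf a g p).
Proof. intros p Hp. unfold Vf.
  rewrite !(pdC_opp U _ g) by (auto; lia). ring. Qed.

Lemma Vf_mult U a (g h : cfun) : SmC U g -> SmC U h ->
  EqC U (Vf a (fun p => g p * h p)) (fun p => Vf a g p * h p + g p * Vf a h p).
Proof. intros Hg Hh p Hp. unfold Vf.
  rewrite !(pdC_mult U _ g h) by (auto; lia). ring. Qed.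

Lemma Vf_inv U a (g : cfun) : is_open U -> (forall p, U p -> g p <> 0) -> SmC U g ->
  EqC U (Vf a (fun p => / g p)) (fun p => - Vf a g p * (/ g p * / g p)).
Proof. intros HU Hn Hg p Hp. unfold Vf.
  rewrite !(pdC_inv U _ g) by (auto; lia). ring. Qed.

Lemma Vf_conj a g : cconj (Vf a g) = Vf (fun i => cconj (a i)) (cconj g).
Proof. apply functional_extensionality; intro p. unfold Vf. rewrite !pdC_conj.
  unfold cconj. apply C_eq; cbn [fst snd Cplus Cmult Cconj]; ring. Qed.

Ltac smc := repeat (first [ assumption | lia
  | match goal with H : SmCf ?U ?a |- SmC ?U (?a _) => apply H; lia end
  | apply SmC_plus | apply SmC_minus | apply SmC_mult | apply SmC_opp | apply SmC_const
  | apply SmC_conj | apply SmC_Vf | apply SmC_pdC ]).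

Lemma pdC_Vf U i a (g : cfun) : is_open U -> (i < 5)%nat -> SmCf U a -> SmC U g ->
  EqC U (pdC i (Vf a g)) (fun p => (pdC i (a 0%nat) p * pdC 0 g p + a 0%nat p * pdC i (pdC 0 g) p) + (pdC i (a 1%nat) p * pdC 1 g p + a 1%nat p * pdC i (pdC 1 g) p) + (pdC i (a 2%nat) p * pdC 2 g p + a 2%nat p * pdC i (pdC 2 g) p) + (pdC i (a 3%nat) p * pdC 3 g p + a 3%nat p * pdC i (pdC 3 g) p) + (pdC i (a 4%nat) p * pdC 4 g p + a 4%nat p * pdC i (pdC 4 g) p)).
Proof. intros HU Hi Ha Hg p Hp. unfold Vf.
  rewrite (pdC_plus U i) by smc. rewrite (pdC_plus U i) by smc.
  rewrite (pdC_plus U i) by smc. rewrite (pdC_plus U i) by smc.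
  rewrite !(pdC_mult U i) by smc. ring. Qed.

Lemma Vf_Vf U a b (g : cfun) : is_open U -> SmCf U a -> SmCf U b -> SmC U g ->
  EqC U (Vf a (Vf b g)) (fun p => a 0%nat p * ((pdC 0 (b 0%nat) p * pdC 0 g p + b 0%nat p * pdC 0 (pdC 0 g) p) + (pdC 0 (b 1%nat) p * pdC 1 g p + b 1%nat p * pdC 0 (pdC 1 g) p) + (pdC 0 (b 2%nat) p * pdC 2 g p + b 2%nat p * pdC 0 (pdC 2 g) p) + (pdC 0 (b 3%nat) p * pdC 3 g p + b 3%nat p * pdC 0 (pdC 3 g) p) + (pdC 0 (b 4%nat) p * pdC 4 g p + b 4%nat p * pdC 0 (pdC 4 g) p)) + a 1%nat p * ((pdC 1 (b 0%nat) p * pdC 0 g p + b 0%nat p * pdC 1 (pdC 0 g) p) + (pdC 1 (b 1%nat) p * pdC 1 g p + b 1%nat p * pdC 1 (pdC 1 g) p) + (pdC 1 (b 2%nat) p * pdC 2 g p + b 2%nat p * pdC 1 (pdC 2 g) p) + (pdC 1 (b 3%nat) p * pdC 3 g p + b 3%nat p * pdC 1 (pdC 3 g) p) + (pdC 1 (b 4%nat) p * pdC 4 g p + b 4%nat p * pdC 1 (pdC 4 g) p)) + a 2%nat p * ((pdC 2 (b 0%nat) p * pdC 0 g p + b 0%nat p * pdC 2 (pdC 0 g) p) + (pdC 2 (b 1%nat) p * pdC 1 g p + b 1%nat p * pdC 2 (pdC 1 g) p) + (pdC 2 (b 2%nat) p * pdC 2 g p + b 2%nat p * pdC 2 (pdC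 2 g) p) + (pdC 2 (b 3%nat) p * pdC 3 g p + b 3%nat p * pdC 2 (pdC 3 g) p) + (pdC 2 (b 4%nat) p * pdC 4 g p + b 4%nat p * pdC 2 (pdC 4 g) p)) + a 3%nat p * ((pdC 3 (b 0%nat) p * pdC 0 g p + b 0%nat p * pdC 3 (pdC 0 g) p) + (pdC 3 (b 1%nat) p * pdC 1 g p + b 1%nat p * pdC 3 (pdC 1 g) p) + (pdC 3 (b 2%nat) p * pdC 2 g p + b 2%nat p * pdC 3 (pdC 2 g) p) + (pdC 3 (b 3%nat) p * pdC 3 g p + b 3%nat p * pdC 3 (pdC 3 g) p) + (pdC 3 (b 4%nat) p * pdC 4 g p + b 4%nat p * pdC 3 (pdC 4 g) p)) + a 4%nat p * ((pdC 4 (b 0%nat) p * pdC 0 g p + b 0%nat p * pdC 4 (pdC 0 g) p) + (pdC 4 (b 1%nat) p * pdC 1 g p + b 1%nat p * pdC 4 (pdC 1 g) p) + (pdC 4 (b 2%nat) p * pdC 2 g p + b 2%nat p * pdC 4 (pdC 2 g) p) + (pdC 4 (b 3%nat) p * pdC 3 g p + b 3%nat p * pdC 4 (pdC 3 g) p) + (pdC 4 (b 4%nat) p * pdC 4 g p + b 4%nat p * pdC 4 (pdC 4 g) p))).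
Proof. intros HU Ha Hb Hg p Hp. unfold Vf at 1.
  rewrite !(pdC_Vf U _ b g) by smc. reflexivity. Qed.

Lemma Vf_comm U a b (g : cfun) : is_open U -> SmCf U a -> SmCf U b -> SmC U g ->
  EqC U (fun p => Vf a (Vf b g) p - Vf b (Vf a g) p) (Vf (fun i p => Vf a (b i) p - Vf b (a i) p) g).
Proof. intros HU Ha Hb Hg p Hp.
  rewrite (Vf_Vf U a b g) by auto. rewrite (Vf_Vf U b a g) by auto.
  unfold Vf.
  rewrite (pdC_comm U 1 0 g HU Hg) by (auto; lia).
  rewrite (pdC_comm U 2 0 g HU Hg) by (auto; lia).
  rewrite (pdC_comm U 3 0 g HU Hg) by (auto; lia).
  rewrite (pdC_comm U 4 0 g HU Hg) by (auto; lia).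
  rewrite (pdC_comm U 2 1 g HU Hg) by (auto; lia).
  rewrite (pdC_comm U 3 1 g HU Hg) by (auto; lia).
  rewrite (pdC_comm U 4 1 g HU Hg) by (auto; lia).
  rewrite (pdC_comm U 3 2 g HU Hg) by (auto; lia).
  rewrite (pdC_comm U 4 2 g HU Hg) by (auto; lia).
  rewrite (pdC_comm U 4 3 g HU Hg) by (auto; lia).
  ring. Qed.
Lemma Ci2 : Ci * Ci = - (1). Proof. apply injective_projections; simpl; ring. Qed.

Definition fam (c0 c1 c2 c3 : C) (al : cfun) : nat -> cfun := fun i =>
  match i with 0%nat => fun _ => c0 | 1%nat => fun _ => c1 | 2%nat => fun _ => c2
  | 3%nat => fun _ => c3 | _ => al end.

Lemma SmCf_fam U c0 c1 c2 c3 al : SmC U al -> SmCf U (fam c0 c1 c2 c3 al).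
Proof. intros H i Hi. destruct i as [|[|[|[|i]]]]; simpl; auto; apply SmC_const. Qed.

Lemma Vf_fam c0 c1 c2 c3 al g p : Vf (fam c0 c1 c2 c3 al) g p =
  c0 * pdC 0 g p + c1 * pdC 1 g p + c2 * pdC 2 g p + c3 * pdC 3 g p + al p * pdC 4 g p.
Proof. reflexivity. Qed.

Lemma Vf_comm_fam U c0 c1 c2 c3 al d0 d1 d2 d3 be (g : cfun) : is_open U ->
  SmC U al -> SmC U be -> SmC U g ->
  EqC U (fun p => Vf (fam c0 c1 c2 c3 al) (Vf (fam d0 d1 d2 d3 be) g) p
                - Vf (fam d0 d1 d2 d3 be) (Vf (fam c0 c1 c2 c3 al) g) p)
        (fun p => (Vf (fam c0 c1 c2 c3 al) be p - Vf (fam d0 d1 d2 d3 be) al p) * pdC 4 g p).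
Proof. intros HU Ha Hb Hg p Hp.
  rewrite (Vf_comm U _ _ g HU) by (auto; apply SmCf_fam; auto).
  unfold Vf at 1. simpl fam. rewrite !Vf_const. ring. Qed.

Definition vv : pt -> R := fun p => pv p.

Lemma pdR_pv_lt4 i : (i < 4)%nat -> pdR i vv = fun _ => 0%R.
Proof. intro Hi. apply functional_extensionality; intro p. unfold pdR, vv.
  destruct i as [|[|[|[|i]]]]; try lia; simpl; apply Derive_const. Qed.

Lemma pdR_pv_4 : pdR 4 vv = fun _ => 1%R.
Proof. apply functional_extensionality; intro p. unfold pdR, vv. simpl. apply Derive_id. Qed.

Lemma cont_pv p : continuous_at_pt vv p.
Proof. intros eps He. exists eps. split; auto. intros q Hq. unfold vv.
  eapply Rle_lt_trans; [|exact Hq]. rewrite Rabs_minus_sym. unfold dist_pt.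
  eapply Rle_trans; [|apply Rmax_r]. eapply Rle_trans; [|apply Rmax_r].
  eapply Rle_trans; [|apply Rmax_r]. apply Rmax_r. Qed.

Lemma Smooth_pv U : Smooth U vv.
Proof. intro n. destruct n; simpl.
  - intros; apply cont_pv.
  - repeat split.
    + intros; apply cont_pv.
    + intros i p Hi Hp. unfold vv. destruct i as [|[|[|[|[|i]]]]]; try lia; simpl;
      try apply ex_derive_const; apply ex_derive_id.
    + intros i Hi. destruct (Nat.eq_dec i 4) as [->|Hne].
      rewrite pdR_pv_4. apply Sn_const.
      rewrite pdR_pv_lt4 by lia. apply Sn_const. Qed.
Lemma RtoC_nz (r : R) : r <> 0%R -> RtoC r <> 0.
Proof. intros H E. apply (f_equal fst) in E. simpl in E. auto. Qed.

Definition l1 F := fam (/2) (-Ci/2) 0 0 (A1 F).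
Definition l2 F := fam 0 0 (/2) (-Ci/2) (A2 F).
Definition lb1 F := fam (/2) (Ci/2) 0 0 (cconj (A1 F)).
Definition lb2 F := fam 0 0 (/2) (Ci/2) (cconj (A2 F)).
Definition tT := fam 0 0 0 0 (fun _ => 1).

Lemma L1_eq F : L1 F = Vf (l1 F).
Proof. apply functional_extensionality; intro g; apply functional_extensionality; intro p.
  unfold L1, dz1, dv, l1. rewrite Vf_fam. unfold Cdiv. ring. Qed.
Lemma L2_eq F : L2 F = Vf (l2 F).
Proof. apply functional_extensionality; intro g; apply functional_extensionality; intro p.
  unfold L2, dz2, dv, l2. rewrite Vf_fam. unfold Cdiv. ring. Qed.
Lemma Lb1_eq F : Lb1 F = Vf (lb1 F).
Proof. apply functional_extensionality; intro g; apply functional_extensionality; intro p.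
  unfold Lb1, dzb1, dv, lb1. rewrite Vf_fam. unfold Cdiv, cconj. ring. Qed.
Lemma Lb2_eq F : Lb2 F = Vf (lb2 F).
Proof. apply functional_extensionality; intro g; apply functional_extensionality; intro p.
  unfold Lb2, dzb2, dv, lb2. rewrite Vf_fam. unfold Cdiv, cconj. ring. Qed.
Lemma T_eq g p : Vf tT g p = pdC 4 g p.
Proof. unfold tT. rewrite Vf_fam. ring. Qed.

Lemma SmC_Fc U F : Smooth U F -> SmC U (Fc F).
Proof. intro H. split. exact H. exact (Smooth_const U 0%R). Qed.

Lemma snd_pdC_Fc F i p : snd (pdC i (Fc F) p) = 0%R.
Proof. unfold pdC. simpl. change (pdR i (fun _ => 0%R) p = 0%R). rewrite pdR_const. reflexivity. Qed.

Lemma den_nz F p : 1 + Ci * dv (Fc F) p <> 0.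
Proof. assert (H : snd (dv (Fc F) p) = 0%R) by apply snd_pdC_Fc.
  destruct (dv (Fc F) p) as [a b]. simpl in H. subst b. intro E.
  apply (f_equal fst) in E. simpl in E. lra. Qed.

Ltac smc2 := repeat (first [ assumption | lia
  | match goal with H : SmCf ?U ?a |- SmC ?U (?a _) => apply H; lia end
  | apply SmC_plus | apply SmC_minus | apply SmC_mult | apply SmC_opp | apply SmC_const
  | apply SmC_conj | apply SmC_Vf | apply SmC_pdC | apply SmC_div | apply SmC_inv
  | apply SmCf_fam ]).

Lemma SmC_A1 U F : is_open U -> Smooth U F -> SmC U (A1 F).
Proof. intros HU HF. assert (Hc := SmC_Fc U F HF). unfold A1, dz1, dv. smc2;
  intros; first [apply den_nz | apply RtoC_nz; lra]. Qed.
Lemma SmC_A2 U F : is_open U -> Smooth U F -> SmC U (A2 F).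
Proof. intros HU HF. assert (Hc := SmC_Fc U F HF). unfold A2, dz2, dv. smc2;
  intros; first [apply den_nz | apply RtoC_nz; lra]. Qed.

Lemma SmCf_l1 U F : is_open U -> Smooth U F -> SmCf U (l1 F).
Proof. intros. apply SmCf_fam, SmC_A1; auto. Qed.
Lemma SmCf_l2 U F : is_open U -> Smooth U F -> SmCf U (l2 F).
Proof. intros. apply SmCf_fam, SmC_A2; auto. Qed.
Lemma SmCf_lb1 U F : is_open U -> Smooth U F -> SmCf U (lb1 F).
Proof. intros. apply SmCf_fam, SmC_conj, SmC_A1; auto. Qed.
Lemma SmCf_lb2 U F : is_open U -> Smooth U F -> SmCf U (lb2 F).
Proof. intros. apply SmCf_fam, SmC_conj, SmC_A2; auto. Qed.
Lemma SmCf_tT U : SmCf U tT.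
Proof. apply SmCf_fam, SmC_const. Qed.

(* the antiholomorphic function wbar = F - i v *)
Definition Wb F : cfun := fun p => (F p, - vv p)%R.

Lemma SmC_Wb U F : is_open U -> Smooth U F -> SmC U (Wb F).
Proof. intros HU HF. split. exact HF. apply Smooth_opp; auto. apply Smooth_pv. Qed.

Lemma pdC_Wb_lt4 F i : (i < 4)%nat -> pdC i (Wb F) = pdC i (Fc F).
Proof. intro Hi. apply functional_extensionality; intro p. apply C_eq.
  reflexivity. rewrite snd_pdC_Fc. unfold pdC, Wb. simpl. unfold pdR. rewrite Derive_opp.
  change (- pdR i vv p = 0)%R. rewrite pdR_pv_lt4 by auto. ring. Qed.

Lemma pdC_Wb_4 F : pdC 4 (Wb F) = fun p => pdC 4 (Fc F) p - Ci.
Proof. apply functional_extensionality; intro p. apply C_eq.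
  unfold pdC, Wb. simpl. ring. rewrite <- (Rplus_0_l (snd (pdC 4 (Wb F) p))).
  rewrite <- (snd_pdC_Fc F 4 p). unfold pdC, Wb. simpl. unfold pdR at 2. rewrite Derive_opp.
  change (pdR 4 (fun _ => 0%R) p + - pdR 4 vv p = pdR 4 (fun q => snd (Fc F q)) p + - (1))%R.
  rewrite pdR_pv_4. reflexivity. Qed.

Lemma L1_Wb F p : Vf (l1 F) (Wb F) p = 0.
Proof. unfold l1. rewrite Vf_fam. rewrite !pdC_Wb_lt4 by lia. rewrite pdC_Wb_4.
  unfold A1, dz1, dv. assert (H := den_nz F p). unfold dv in H.
  set (Y := 1 + Ci * pdC 4 (Fc F) p) in *. assert (HY : Y * / Y = 1) by (apply Cinv_r; auto).
  replace (pdC 4 (Fc F) p - Ci) with (- Ci * Y) by (unfold Y; ring [Ci2]).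
  unfold Cdiv. ring [Ci2 HY]. Qed.

Lemma L2_Wb F p : Vf (l2 F) (Wb F) p = 0.
Proof. unfold l2. rewrite Vf_fam. rewrite !pdC_Wb_lt4 by lia. rewrite pdC_Wb_4.
  unfold A2, dz2, dv. assert (H := den_nz F p). unfold dv in H.
  set (Y := 1 + Ci * pdC 4 (Fc F) p) in *. assert (HY : Y * / Y = 1) by (apply Cinv_r; auto).
  replace (pdC 4 (Fc F) p - Ci) with (- Ci * Y) by (unfold Y; ring [Ci2]).
  unfold Cdiv. ring [Ci2 HY]. Qed.

Lemma I1 U F : is_open U -> Smooth U F ->
  EqC U (Vf (l1 F) (A2 F)) (Vf (l2 F) (A1 F)).
Proof. intros HU HF p Hp.
  assert (E := Vf_comm_fam U (/2) (-Ci/2) 0 0 (A1 F) 0 0 (/2) (-Ci/2) (A2 F) (Wb F) HU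
     (SmC_A1 U F HU HF) (SmC_A2 U F HU HF) (SmC_Wb U F HU HF) p Hp).
  fold (l1 F) (l2 F) in E. cbv beta in E.
  rewrite (Vf_zero U (l1 F) (Vf (l2 F) (Wb F)) HU) in E by (auto; intros q _; apply L2_Wb).
  rewrite (Vf_zero U (l2 F) (Vf (l1 F) (Wb F)) HU) in E by (auto; intros q _; apply L1_Wb).
  rewrite pdC_Wb_4 in E.
  assert (Hn : pdC 4 (Fc F) p - Ci <> 0).
  { assert (H : snd (pdC 4 (Fc F) p) = 0%R) by apply snd_pdC_Fc.
    destruct (pdC 4 (Fc F) p) as [a b]. simpl in H. subst b. intro E2.
    apply (f_equal snd) in E2. simpl in E2. lra. }
  assert (Z : (Vf (l1 F) (A2 F) p - Vf (l2 F) (A1 F) p) * (pdC 4 (Fc F) p - Ci) = 0)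
    by (rewrite <- E; ring).
  replace (Vf (l1 F) (A2 F) p) with (Vf (l2 F) (A1 F) p +
     (Vf (l1 F) (A2 F) p - Vf (l2 F) (A1 F) p) * (pdC 4 (Fc F) p - Ci) * / (pdC 4 (Fc F) p - Ci))
    by (field; auto).
  rewrite Z. ring. Qed.
Definition B11 F : cfun := fun p => Vf (l1 F) (cconj (A1 F)) p - Vf (lb1 F) (A1 F) p.
Definition B12 F : cfun := fun p => Vf (l1 F) (cconj (A2 F)) p - Vf (lb2 F) (A1 F) p.
Definition B21 F : cfun := fun p => Vf (l2 F) (cconj (A1 F)) p - Vf (lb1 F) (A2 F) p.
Definition B22 F : cfun := fun p => Vf (l2 F) (cconj (A2 F)) p - Vf (lb2 F) (A2 F) p.
Definition kv F : cfun := fun p => - B21 F p / B11 F p.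
Definition kf F : nat -> cfun := fun i p => kv F p * l1 F i p + l2 F i p.
Definition kbf F : nat -> cfun := fun i p => Cconj (kv F p) * lb1 F i p + lb2 F i p.
Definition mm F : cfun := Vf (lb1 F) (cconj (kv F)).
Definition nn F : cfun := Vf (l1 F) (kv F).
Definition Pv F : cfun := fun p => (Vf (l1 F) (B11 F) p - B11 F p * pdC 4 (A1 F) p) / B11 F p.
Definition av F := Vf (lb1 F) (kv F).
Definition bv F := Vf (lb1 F) (av F).
Definition cv F := Vf (lb1 F) (bv F).

Definition Good U F := is_open U /\ Smooth U F /\ (forall p, U p -> B11 F p <> 0) /\
  (forall p, U p -> B11 F p * B22 F p = B12 F p * B21 F p).

Lemma Vf_kf F g p : Vf (kf F) g p = kv F p * Vf (l1 F) g p + Vf (l2 F) g p.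
Proof. unfold Vf, kf. ring. Qed.
Lemma Vf_kbf F g p : Vf (kbf F) g p = Cconj (kv F p) * Vf (lb1 F) g p + Vf (lb2 F) g p.
Proof. unfold Vf, kbf. ring. Qed.

Ltac smc3 U F HU HF := let h1 := fresh in let h2 := fresh in let h3 := fresh in let h4 := fresh in
  let h5 := fresh in let h6 := fresh in let h7 := fresh in
  assert (h1 := SmCf_l1 U F HU HF); assert (h2 := SmCf_l2 U F HU HF);
  assert (h3 := SmCf_lb1 U F HU HF); assert (h4 := SmCf_lb2 U F HU HF);
  assert (h5 := SmC_A1 U F HU HF); assert (h6 := SmC_A2 U F HU HF); assert (h7 := SmC_Fc U F HF).

Lemma SmC_B U F : is_open U -> Smooth U F ->
  SmC U (B11 F) /\ SmC U (B12 F) /\ SmC U (B21 F) /\ SmC U (B22 F).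
Proof. intros HU HF. smc3 U F HU HF. unfold B11, B12, B21, B22. repeat split; smc2. Qed.

Lemma SmC_kv U F : Good U F -> SmC U (kv F).
Proof. intros [HU [HF [Hn _]]]. destruct (SmC_B U F HU HF) as [S11 [S12 [S21 S22]]].
  unfold kv. smc2. Qed.

Lemma SmCf_kf U F : Good U F -> SmCf U (kf F).
Proof. intros HG. assert (Hk := SmC_kv U F HG). destruct HG as [HU [HF _]].
  smc3 U F HU HF. intros i Hi. unfold kf. smc2. Qed.
Lemma SmCf_kbf U F : Good U F -> SmCf U (kbf F).
Proof. intros HG. assert (Hk := SmC_kv U F HG). destruct HG as [HU [HF _]].
  smc3 U F HU HF. intros i Hi. unfold kbf.
  change (SmC U (fun p => cconj (kv F) p * lb1 F i p + lb2 F i p)). smc2. Qed.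

Lemma C12 U F g : is_open U -> Smooth U F -> SmC U g ->
  EqC U (fun p => Vf (l1 F) (Vf (l2 F) g) p - Vf (l2 F) (Vf (l1 F) g) p) (fun _ => 0).
Proof. intros HU HF Hg p Hp.
  assert (E := Vf_comm_fam U (/2) (-Ci/2) 0 0 (A1 F) 0 0 (/2) (-Ci/2) (A2 F) g HU (SmC_A1 U F HU HF) (SmC_A2 U F HU HF) Hg p Hp).
  fold (l1 F) (l2 F) in E. cbv beta in E |- *. rewrite E. rewrite (I1 U F HU HF p Hp). ring. Qed.

Lemma C1b1 U F g : is_open U -> Smooth U F -> SmC U g ->
  EqC U (fun p => Vf (l1 F) (Vf (lb1 F) g) p - Vf (lb1 F) (Vf (l1 F) g) p) (fun p => B11 F p * pdC 4 g p).
Proof. intros HU HF Hg p Hp.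
  exact (Vf_comm_fam U _ _ _ _ (A1 F) _ _ _ _ (cconj (A1 F)) g HU (SmC_A1 U F HU HF)
    (SmC_conj U _ HU (SmC_A1 U F HU HF)) Hg p Hp). Qed.
Lemma C2b1 U F g : is_open U -> Smooth U F -> SmC U g ->
  EqC U (fun p => Vf (l2 F) (Vf (lb1 F) g) p - Vf (lb1 F) (Vf (l2 F) g) p) (fun p => B21 F p * pdC 4 g p).
Proof. intros HU HF Hg p Hp.
  exact (Vf_comm_fam U _ _ _ _ (A2 F) _ _ _ _ (cconj (A1 F)) g HU (SmC_A2 U F HU HF)
    (SmC_conj U _ HU (SmC_A1 U F HU HF)) Hg p Hp). Qed.
Lemma C1b2 U F g : is_open U -> Smooth U F -> SmC U g ->
  EqC U (fun p => Vf (l1 F) (Vf (lb2 F) g) p - Vf (lb2 F) (Vf (l1 F) g) p) (fun p => B12 F p * pdC 4 g p).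
Proof. intros HU HF Hg p Hp.
  exact (Vf_comm_fam U _ _ _ _ (A1 F) _ _ _ _ (cconj (A2 F)) g HU (SmC_A1 U F HU HF)
    (SmC_conj U _ HU (SmC_A2 U F HU HF)) Hg p Hp). Qed.
Lemma C2b2 U F g : is_open U -> Smooth U F -> SmC U g ->
  EqC U (fun p => Vf (l2 F) (Vf (lb2 F) g) p - Vf (lb2 F) (Vf (l2 F) g) p) (fun p => B22 F p * pdC 4 g p).
Proof. intros HU HF Hg p Hp.
  exact (Vf_comm_fam U _ _ _ _ (A2 F) _ _ _ _ (cconj (A2 F)) g HU (SmC_A2 U F HU HF)
    (SmC_conj U _ HU (SmC_A2 U F HU HF)) Hg p Hp). Qed.
Lemma C1T U F g : is_open U -> Smooth U F -> SmC U g ->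
  EqC U (fun p => Vf (l1 F) (pdC 4 g) p - pdC 4 (Vf (l1 F) g) p) (fun p => - pdC 4 (A1 F) p * pdC 4 g p).
Proof. intros HU HF Hg p Hp.
  assert (E := Vf_comm_fam U (/2) (-Ci/2) 0 0 (A1 F) 0 0 0 0 (fun _ => 1) g HU (SmC_A1 U F HU HF)
    (SmC_const U 1) Hg p Hp). fold (l1 F) tT in E. cbv beta in E.
  rewrite Vf_const in E. rewrite T_eq in E.
  assert (E2 : Vf (l1 F) (Vf tT g) p = Vf (l1 F) (pdC 4 g) p).
  { apply (Vf_ext U); auto. intros q _. apply T_eq. }
  rewrite E2 in E. rewrite E. rewrite T_eq. ring. Qed.
Lemma C2T U F g : is_open U -> Smooth U F -> SmC U g ->
  EqC U (fun p => Vf (l2 F) (pdC 4 g) p - pdC 4 (Vf (l2 F) g) p) (fun p => - pdC 4 (A2 F) p * pdC 4 g p).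
Proof. intros HU HF Hg p Hp.
  assert (E := Vf_comm_fam U 0 0 (/2) (-Ci/2) (A2 F) 0 0 0 0 (fun _ => 1) g HU (SmC_A2 U F HU HF)
    (SmC_const U 1) Hg p Hp). fold (l2 F) tT in E. cbv beta in E.
  rewrite Vf_const in E. rewrite T_eq in E.
  assert (E2 : Vf (l2 F) (Vf tT g) p = Vf (l2 F) (pdC 4 g) p).
  { apply (Vf_ext U); auto. intros q _. apply T_eq. }
  rewrite E2 in E. rewrite E. rewrite T_eq. ring. Qed.
Lemma eq_sub (a b c : C) : a - b = c -> a = b + c.
Proof. intro H. rewrite <- H. ring. Qed.

Lemma J1 U F : is_open U -> Smooth U F -> EqC U (Vf (l2 F) (B11 F))
  (fun p => Vf (l1 F) (B21 F) p - B21 F p * pdC 4 (A1 F) p + B11 F p * pdC 4 (A2 F) p).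
Proof. intros HU HF p Hp. smc3 U F HU HF.
  assert (E1 := C12 U F (cconj (A1 F)) HU HF ltac:(smc2) p Hp). cbv beta in E1. apply eq_sub in E1.
  assert (E2 := C1b1 U F (A2 F) HU HF ltac:(smc2) p Hp). cbv beta in E2. apply eq_sub in E2.
  assert (E3 := C2b1 U F (A1 F) HU HF ltac:(smc2) p Hp). cbv beta in E3. apply eq_sub in E3.
  assert (E4 : Vf (lb1 F) (Vf (l1 F) (A2 F)) p = Vf (lb1 F) (Vf (l2 F) (A1 F)) p)
    by (apply (Vf_ext U); auto; apply I1; auto).
  assert (EB1 : Vf (l2 F) (B11 F) p = Vf (l2 F) (Vf (l1 F) (cconj (A1 F))) p - Vf (l2 F) (Vf (lb1 F) (A1 F)) p)
    by exact (Vf_minus U (l2 F) (Vf (l1 F) (cconj (A1 F))) (Vf (lb1 F) (A1 F)) HU ltac:(smc2) ltac:(smc2) p Hp).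
  assert (EB2 : Vf (l1 F) (B21 F) p = Vf (l1 F) (Vf (l2 F) (cconj (A1 F))) p - Vf (l1 F) (Vf (lb1 F) (A2 F)) p)
    by exact (Vf_minus U (l1 F) (Vf (l2 F) (cconj (A1 F))) (Vf (lb1 F) (A2 F)) HU ltac:(smc2) ltac:(smc2) p Hp).
  rewrite EB1, EB2, E1, E2, E3, E4. ring. Qed.

Lemma J2 U F : is_open U -> Smooth U F -> EqC U (Vf (l2 F) (B12 F))
  (fun p => Vf (l1 F) (B22 F) p - B22 F p * pdC 4 (A1 F) p + B12 F p * pdC 4 (A2 F) p).
Proof. intros HU HF p Hp. smc3 U F HU HF.
  assert (E1 := C12 U F (cconj (A2 F)) HU HF ltac:(smc2) p Hp). cbv beta in E1. apply eq_sub in E1.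
  assert (E2 := C1b2 U F (A2 F) HU HF ltac:(smc2) p Hp). cbv beta in E2. apply eq_sub in E2.
  assert (E3 := C2b2 U F (A1 F) HU HF ltac:(smc2) p Hp). cbv beta in E3. apply eq_sub in E3.
  assert (E4 : Vf (lb2 F) (Vf (l1 F) (A2 F)) p = Vf (lb2 F) (Vf (l2 F) (A1 F)) p)
    by (apply (Vf_ext U); auto; apply I1; auto).
  assert (EB1 : Vf (l2 F) (B12 F) p = Vf (l2 F) (Vf (l1 F) (cconj (A2 F))) p - Vf (l2 F) (Vf (lb2 F) (A1 F)) p)
    by exact (Vf_minus U (l2 F) (Vf (l1 F) (cconj (A2 F))) (Vf (lb2 F) (A1 F)) HU ltac:(smc2) ltac:(smc2) p Hp).
  assert (EB2 : Vf (l1 F) (B22 F) p = Vf (l1 F) (Vf (l2 F) (cconj (A2 F))) p - Vf (l1 F) (Vf (lb2 F) (A2 F)) p)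
    by exact (Vf_minus U (l1 F) (Vf (l2 F) (cconj (A2 F))) (Vf (lb2 F) (A2 F)) HU ltac:(smc2) ltac:(smc2) p Hp).
  rewrite EB1, EB2, E1, E2, E3, E4. ring. Qed.

Lemma DL1 U F : Good U F -> forall p, U p ->
  Vf (l1 F) (B11 F) p * B22 F p + B11 F p * Vf (l1 F) (B22 F) p
  - (Vf (l1 F) (B12 F) p * B21 F p + B12 F p * Vf (l1 F) (B21 F) p) = 0.
Proof. intros [HU [HF [Hn Hr]]] p Hp. smc3 U F HU HF.
  destruct (SmC_B U F HU HF) as [S11 [S12 [S21 S22]]].
  assert (Z := Vf_zero U (l1 F) (fun p => B11 F p * B22 F p - B12 F p * B21 F p) HU
     ltac:(intros q Hq; change (B11 F q * B22 F q - B12 F q * B21 F q = (0:C)); rewrite Hr; auto; apply Cplus_opp_r) p Hp).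
  rewrite (Vf_minus U) in Z by smc2. rewrite !(Vf_mult U) in Z by smc2. exact Z. Qed.

Lemma Vf_div U a (g h : cfun) : is_open U -> (forall p, U p -> h p <> 0) -> SmC U g -> SmC U h ->
  EqC U (Vf a (fun p => g p / h p)) (fun p => (Vf a g p * h p - g p * Vf a h p) / (h p * h p)).
Proof. intros HU Hn Hg Hh p Hp. unfold Cdiv.
  rewrite (Vf_mult U a g (fun p => / h p)) by (auto; apply SmC_inv; auto).
  rewrite (Vf_inv U a h HU Hn Hh p Hp). field. auto. Qed.

Lemma cconj_cconj (g : cfun) : cconj (cconj g) = g.
Proof. apply functional_extensionality; intro p. unfold cconj. apply Cconj_conj. Qed.

Lemma Vf_fam_ext a b g p : (forall i, (i < 5)%nat -> a i p = b i p) -> Vf a g p = Vf b g p.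
Proof. intro H. unfold Vf. rewrite !H by lia. reflexivity. Qed.

Lemma conj_Vf_gen a b g p : (forall i, (i < 5)%nat -> Cconj (a i p) = b i p) ->
  Cconj (Vf a g p) = Vf b (cconj g) p.
Proof. intro H. change (Cconj (Vf a g p)) with (cconj (Vf a g) p). rewrite Vf_conj.
  apply Vf_fam_ext. intros i Hi. unfold cconj. auto. Qed.

Lemma conj_half : Cconj (/ 2) = / 2.
Proof. unfold Cconj, Cinv. simpl. f_equal. unfold Rdiv. ring. Qed.
Lemma conj_mCi2 : Cconj (- Ci / 2) = Ci / 2.
Proof. unfold Cdiv. rewrite Cmult_conj, conj_half. apply C_eq; simpl; ring. Qed.
Lemma conj_Ci2 : Cconj (Ci / 2) = - Ci / 2.
Proof. unfold Cdiv. rewrite Cmult_conj, conj_half. apply C_eq; simpl; ring. Qed.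
Lemma conj_0 : Cconj 0 = 0.
Proof. apply C_eq; simpl; ring. Qed.

Ltac conjfam := intros i Hi; destruct i as [|[|[|[|[|i]]]]]; try lia; simpl;
  rewrite ?conj_half, ?conj_mCi2, ?conj_Ci2, ?conj_0; try reflexivity;
  unfold cconj; rewrite ?Cconj_conj; reflexivity.

Lemma conj_l1 F g p : Cconj (Vf (l1 F) g p) = Vf (lb1 F) (cconj g) p.
Proof. apply conj_Vf_gen. unfold l1, lb1. conjfam. Qed.
Lemma conj_l2 F g p : Cconj (Vf (l2 F) g p) = Vf (lb2 F) (cconj g) p.
Proof. apply conj_Vf_gen. unfold l2, lb2. conjfam. Qed.
Lemma conj_lb1 F g p : Cconj (Vf (lb1 F) g p) = Vf (l1 F) (cconj g) p.
Proof. apply conj_Vf_gen. unfold l1, lb1. conjfam. Qed.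
Lemma conj_lb2 F g p : Cconj (Vf (lb2 F) g p) = Vf (l2 F) (cconj g) p.
Proof. apply conj_Vf_gen. unfold l2, lb2. conjfam. Qed.

Lemma conj_B11 F p : Cconj (B11 F p) = - B11 F p.
Proof. unfold B11. rewrite Cminus_conj, conj_l1, conj_lb1, cconj_cconj. ring. Qed.
Lemma conj_B21 F p : Cconj (B21 F p) = - B12 F p.
Proof. unfold B21, B12. rewrite Cminus_conj, conj_l2, conj_lb1, cconj_cconj. ring. Qed.
Lemma conj_l1_fam F i p : (i < 5)%nat -> Cconj (l1 F i p) = lb1 F i p.
Proof. revert i. unfold l1, lb1. conjfam. Qed.
Lemma conj_l2_fam F i p : (i < 5)%nat -> Cconj (l2 F i p) = lb2 F i p.
Proof. revert i. unfold l2, lb2. conjfam. Qed.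

Lemma Vf_kbf_f F g : Vf (kbf F) g = fun p => cconj (kv F) p * Vf (lb1 F) g p + Vf (lb2 F) g p.
Proof. apply functional_extensionality; intro p. apply Vf_kbf. Qed.
Lemma Vf_kf_f F g : Vf (kf F) g = fun p => kv F p * Vf (l1 F) g p + Vf (l2 F) g p.
Proof. apply functional_extensionality; intro p. apply Vf_kf. Qed.

Lemma conj_kf F g p : Cconj (Vf (kf F) g p) = Vf (kbf F) (cconj g) p.
Proof. apply conj_Vf_gen. intros i Hi. unfold kf, kbf.
  rewrite Cplus_conj, Cmult_conj, conj_l1_fam, conj_l2_fam by auto. reflexivity. Qed.

Lemma Kk0 U F : Good U F -> EqC U (Vf (kf F) (cconj (kv F))) (fun _ => 0).
Proof. intros HG p Hp. assert (Sk := SmC_kv U F HG). destruct HG as [HU [HF [Hn Hr]]].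
  smc3 U F HU HF. destruct (SmC_B U F HU HF) as [S11 [S12 [S21 S22]]].
  assert (Scv : EqC U (cconj (kv F)) (fun q => - B12 F q / B11 F q)).
  { intros q Hq. unfold cconj, kv. rewrite Cdiv_conj by auto.
    rewrite Copp_conj, conj_B21, conj_B11. field. auto. }
  rewrite Vf_kf. rewrite (Vf_ext U (l1 F) _ _ HU Scv p Hp), (Vf_ext U (l2 F) _ _ HU Scv p Hp).
  rewrite (Vf_div U (l1 F) (fun q => - B12 F q) (B11 F)) by smc2.
  rewrite (Vf_div U (l2 F) (fun q => - B12 F q) (B11 F)) by smc2.
  rewrite (Vf_opp U (l1 F) (B12 F) p Hp), (Vf_opp U (l2 F) (B12 F) p Hp).
  rewrite (J2 U F HU HF p Hp), (J1 U F HU HF p Hp).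
  assert (D := DL1 U F (conj HU (conj HF (conj Hn Hr))) p Hp).
  assert (Hb := Hn p Hp). assert (R := Hr p Hp).
  assert (E : Vf (l1 F) (B22 F) p = (Vf (l1 F) (B12 F) p * B21 F p + B12 F p * Vf (l1 F) (B21 F) p
       - Vf (l1 F) (B11 F) p * B22 F p) / B11 F p).
  { transitivity ((Vf (l1 F) (B11 F) p * B22 F p + B11 F p * Vf (l1 F) (B22 F) p
       - (Vf (l1 F) (B12 F) p * B21 F p + B12 F p * Vf (l1 F) (B21 F) p)) / B11 F p +
       (Vf (l1 F) (B12 F) p * B21 F p + B12 F p * Vf (l1 F) (B21 F) p
       - Vf (l1 F) (B11 F) p * B22 F p) / B11 F p).
    field; auto. rewrite D. field; auto. }
  rewrite E.
  assert (E2 : B22 F p = B12 F p * B21 F p / B11 F p) by (rewrite <- R; field; auto).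
  rewrite E2. unfold kv. field. auto. Qed.

Lemma KbK0 U F : Good U F -> EqC U (Vf (kbf F) (kv F)) (fun _ => 0).
Proof. intros HG p Hp. assert (E := Kk0 U F HG p Hp). cbv beta in E.
  apply (f_equal Cconj) in E. rewrite conj_kf, cconj_cconj, conj_0 in E. exact E. Qed.

Lemma Cb2b1 U F g : is_open U -> Smooth U F -> SmC U g ->
  EqC U (fun p => Vf (lb2 F) (Vf (lb1 F) g) p - Vf (lb1 F) (Vf (lb2 F) g) p) (fun _ => 0).
Proof. intros HU HF Hg p Hp.
  assert (E := Vf_comm_fam U 0 0 (/2) (Ci/2) (cconj (A2 F)) (/2) (Ci/2) 0 0 (cconj (A1 F)) g HU
    (SmC_conj U _ HU (SmC_A2 U F HU HF)) (SmC_conj U _ HU (SmC_A1 U F HU HF)) Hg p Hp).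
  fold (lb1 F) (lb2 F) in E. cbv beta in E |- *. rewrite E.
  rewrite <- conj_l2, <- conj_l1. rewrite (I1 U F HU HF p Hp). ring. Qed.

Lemma C21 U F g : is_open U -> Smooth U F -> SmC U g ->
  EqC U (fun p => Vf (l2 F) (Vf (l1 F) g) p - Vf (l1 F) (Vf (l2 F) g) p) (fun _ => 0).
Proof. intros HU HF Hg p Hp. assert (E := C12 U F g HU HF Hg p Hp). cbv beta in *.
  transitivity (- (Vf (l1 F) (Vf (l2 F) g) p - Vf (l2 F) (Vf (l1 F) g) p)). ring. rewrite E. ring. Qed.

Lemma KbL1 U F g : Good U F -> SmC U g ->
  EqC U (Vf (kbf F) (Vf (lb1 F) g)) (fun p => Vf (lb1 F) (Vf (kbf F) g) p - mm F p * Vf (lb1 F) g p).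
Proof. intros HG Hg p Hp. assert (Sk := SmC_kv U F HG). destruct HG as [HU [HF [Hn Hr]]].
  smc3 U F HU HF. rewrite !Vf_kbf_f. cbv beta.
  rewrite (Vf_plus U) by smc2. rewrite (Vf_mult U) by smc2.
  assert (E := Cb2b1 U F g HU HF Hg p Hp). cbv beta in E. apply eq_sub in E. rewrite E.
  unfold mm. ring. Qed.

Lemma KL1 U F g : Good U F -> SmC U g ->
  EqC U (Vf (kf F) (Vf (l1 F) g)) (fun p => Vf (l1 F) (Vf (kf F) g) p - nn F p * Vf (l1 F) g p).
Proof. intros HG Hg p Hp. assert (Sk := SmC_kv U F HG). destruct HG as [HU [HF [Hn Hr]]].
  smc3 U F HU HF. rewrite !Vf_kf_f. cbv beta.
  rewrite (Vf_plus U) by smc2. rewrite (Vf_mult U) by smc2.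
  assert (E := C21 U F g HU HF Hg p Hp). cbv beta in E. apply eq_sub in E. rewrite E.
  unfold nn. ring. Qed.

Lemma SmC_all U F : Good U F ->
  SmC U (kv F) /\ SmC U (cconj (kv F)) /\ SmC U (mm F) /\ SmC U (nn F) /\ SmC U (av F) /\ SmC U (bv F) /\ SmC U (cv F)
  /\ SmC U (Pv F) /\ SmCf U (kf F) /\ SmCf U (kbf F).
Proof. intros HG. assert (Sk := SmC_kv U F HG). assert (Skf := SmCf_kf U F HG).
  assert (Skbf := SmCf_kbf U F HG). destruct HG as [HU [HF [Hn Hr]]].
  smc3 U F HU HF. destruct (SmC_B U F HU HF) as [S11 [S12 [S21 S22]]].
  unfold mm, nn, cv, bv, av, Pv. repeat split; smc2. Qed.

Lemma Ka U F : Good U F -> EqC U (Vf (kbf F) (av F)) (fun p => - mm F p * av F p).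
Proof. intros HG p Hp. destruct (SmC_all U F HG) as [Sk [Sck [Sm [Sn [Sa [Sb [Sc [SP [Skf Skbf]]]]]]]]].
  assert (HG' := HG). destruct HG' as [HU [HF [Hn Hr]]]. smc3 U F HU HF.
  unfold av at 1. rewrite (KbL1 U F (kv F) HG Sk p Hp).
  rewrite (Vf_zero U (lb1 F) _ HU (KbK0 U F HG) p Hp). fold (av F). ring. Qed.

Lemma Kbv U F : Good U F -> EqC U (Vf (kbf F) (bv F))
  (fun p => - Vf (lb1 F) (mm F) p * av F p - mm F p * bv F p - mm F p * bv F p).
Proof. intros HG p Hp. destruct (SmC_all U F HG) as [Sk [Sck [Sm [Sn [Sa [Sb [Sc [SP [Skf Skbf]]]]]]]]].
  assert (HG' := HG). destruct HG' as [HU [HF [Hn Hr]]]. smc3 U F HU HF.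
  unfold bv at 1. rewrite (KbL1 U F (av F) HG Sa p Hp).
  rewrite (Vf_ext U (lb1 F) _ _ HU (Ka U F HG) p Hp).
  rewrite (Vf_mult U) by smc2. cbv beta. rewrite (Vf_opp U (lb1 F) (mm F) p Hp). fold (bv F). ring. Qed.

Lemma Kcv U F : Good U F -> EqC U (Vf (kbf F) (cv F))
  (fun p => - Vf (lb1 F) (Vf (lb1 F) (mm F)) p * av F p - 3 * Vf (lb1 F) (mm F) p * bv F p
            - 3 * mm F p * cv F p).
Proof. intros HG p Hp. destruct (SmC_all U F HG) as [Sk [Sck [Sm [Sn [Sa [Sb [Sc [SP [Skf Skbf]]]]]]]]].
  assert (HG' := HG). destruct HG' as [HU [HF [Hn Hr]]]. smc3 U F HU HF.
  unfold cv at 1. rewrite (KbL1 U F (bv F) HG Sb p Hp).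
  rewrite (Vf_ext U (lb1 F) _ _ HU (Kbv U F HG) p Hp).
  rewrite (Vf_minus U) by smc2. rewrite (Vf_minus U) by smc2.
  rewrite !(Vf_mult U) by smc2. cbv beta.
  rewrite (Vf_opp U (lb1 F) (Vf (lb1 F) (mm F)) p Hp).
  change (Vf (lb1 F) (av F) p) with (bv F p). change (Vf (lb1 F) (bv F) p) with (cv F p). ring. Qed.
Lemma I2 U F : is_open U -> Smooth U F ->
  EqC U (Vf (l2 F) (pdC 4 (A1 F))) (Vf (l1 F) (pdC 4 (A2 F))).
Proof. intros HU HF p Hp. smc3 U F HU HF.
  assert (E1 := C1T U F (A2 F) HU HF H4 p Hp). cbv beta in E1. apply eq_sub in E1.
  assert (E2 := C2T U F (A1 F) HU HF H3 p Hp). cbv beta in E2. apply eq_sub in E2.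
  rewrite E1, E2. rewrite (pdC_ext U 4 _ _ HU (I1 U F HU HF) p Hp). ring. Qed.

Definition Qv F : cfun := fun p => kv F p * pdC 4 (A1 F) p + pdC 4 (A2 F) p - nn F p.

Lemma Kl U F : Good U F -> EqC U (Vf (kf F) (B11 F)) (fun p => B11 F p * Qv F p).
Proof. intros HG p Hp. assert (HG' := HG). destruct HG' as [HU [HF [Hn Hr]]].
  smc3 U F HU HF. destruct (SmC_B U F HU HF) as [S11 [S12 [S21 S22]]].
  rewrite Vf_kf. rewrite (J1 U F HU HF p Hp). unfold Qv, nn, kv.
  rewrite (Vf_div U (l1 F) (fun q => - B21 F q) (B11 F)) by smc2. cbv beta.
  rewrite (Vf_opp U (l1 F) (B21 F) p Hp). field. auto. Qed.

Lemma KP U F : Good U F -> EqC U (Vf (kf F) (Pv F)) (fun p => - nn F p * Pv F p - Vf (l1 F) (nn F) p).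
Proof. intros HG p Hp. destruct (SmC_all U F HG) as [Sk [Sck [Sm [Sn [Sa [Sb [Sc [SP [Skf Skbf]]]]]]]]].
  assert (HG' := HG). destruct HG' as [HU [HF [Hn Hr]]].
  smc3 U F HU HF. destruct (SmC_B U F HU HF) as [S11 [S12 [S21 S22]]].
  assert (SQ : SmC U (Qv F)) by (unfold Qv; smc2).
  unfold Pv.
  rewrite (Vf_div U (kf F) (fun q => Vf (l1 F) (B11 F) q - B11 F q * pdC 4 (A1 F) q) (B11 F)) by smc2.
  cbv beta.
  rewrite (Vf_minus U) by smc2. rewrite (Vf_mult U) by smc2.
  rewrite (KL1 U F (B11 F) HG S11 p Hp).
  rewrite (Vf_ext U (l1 F) _ _ HU (Kl U F HG) p Hp).
  rewrite (Vf_mult U) by smc2.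
  rewrite (Kl U F HG p Hp).
  rewrite (Vf_kf F (pdC 4 (A1 F)) p).
  rewrite (I2 U F HU HF p Hp).
  assert (EQ : Vf (l1 F) (Qv F) p = nn F p * pdC 4 (A1 F) p + kv F p * Vf (l1 F) (pdC 4 (A1 F)) p
     + Vf (l1 F) (pdC 4 (A2 F)) p - Vf (l1 F) (nn F) p).
  { unfold Qv. rewrite (Vf_minus U) by smc2. rewrite (Vf_plus U) by smc2.
    rewrite (Vf_mult U) by smc2. fold (nn F). ring. }
  rewrite EQ.
  assert (Hb := Hn p Hp). unfold Qv. field. auto. Qed.

Lemma KbPb U F : Good U F -> EqC U (Vf (kbf F) (cconj (Pv F)))
  (fun p => - mm F p * cconj (Pv F) p - Vf (lb1 F) (mm F) p).
Proof. intros HG p Hp. rewrite <- conj_kf. rewrite (KP U F HG p Hp).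
  rewrite Cminus_conj, Cmult_conj, Copp_conj. rewrite (conj_l1 F (nn F)).
  assert (E : cconj (nn F) = mm F).
  { apply functional_extensionality; intro q. unfold cconj, nn. rewrite conj_l1. reflexivity. }
  rewrite E. unfold nn at 1. rewrite conj_l1. reflexivity. Qed.

Lemma KbLPb U F : Good U F -> EqC U (Vf (kbf F) (Vf (lb1 F) (cconj (Pv F))))
  (fun p => - Vf (lb1 F) (mm F) p * cconj (Pv F) p - mm F p * Vf (lb1 F) (cconj (Pv F)) p
            - Vf (lb1 F) (Vf (lb1 F) (mm F)) p - mm F p * Vf (lb1 F) (cconj (Pv F)) p).
Proof. intros HG p Hp. destruct (SmC_all U F HG) as [Sk [Sck [Sm [Sn [Sa [Sb [Sc [SP [Skf Skbf]]]]]]]]].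
  assert (HG' := HG). destruct HG' as [HU [HF [Hn Hr]]]. smc3 U F HU HF.
  rewrite (KbL1 U F (cconj (Pv F)) HG ltac:(smc2) p Hp).
  rewrite (Vf_ext U (lb1 F) _ _ HU (KbPb U F HG) p Hp).
  rewrite (Vf_minus U) by smc2. rewrite (Vf_mult U) by smc2. cbv beta.
  rewrite (Vf_opp U (lb1 F) (mm F) p Hp). ring. Qed.
Ltac smc_step := match goal with
  | |- is_open _ => assumption
  | |- (_ < _)%nat => lia
  | |- SmC ?U (fun _ => ?c) => apply (SmC_const U c)
  | |- SmC ?U (fun x => Cplus (@?g x) (@?h x)) => apply (SmC_plus U g h)
  | |- SmC ?U (fun x => Cminus (@?g x) (@?h x)) => apply (SmC_minus U g h)
  | |- SmC ?U (fun x => Cmult (@?g x) (@?h x)) => apply (SmC_mult U g h)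
  | |- SmC ?U (fun x => Cdiv (@?g x) (@?h x)) => apply (SmC_div U g h)
  | |- SmC ?U (fun x => Copp (@?g x)) => apply (SmC_opp U g)
  | |- SmC ?U (fun x => Cinv (@?g x)) => apply (SmC_inv U g)
  | |- SmC ?U (fun x => ?h ?a x) => change (SmC U (h a))
  | |- SmC ?U (cconj ?g) => apply (SmC_conj U g)
  | |- SmC ?U (Vf ?a ?g) => apply (SmC_Vf U a g)
  | |- SmC ?U (pdC ?i ?g) => apply (SmC_pdC U i g)
  | H : SmCf ?U ?a |- SmC ?U (?a _) => apply H
  | |- SmCf ?U (fam _ _ _ _ _) => apply SmCf_fam
  | |- forall p, ?U p -> _ <> _ => intros ? ?; cbv beta; repeat apply Cmult_neq_0; auto
  | |- SmC _ _ => assumption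
  | |- SmCf _ _ => assumption
  | |- ?U ?p => assumption
  end.
Ltac smc4 := repeat smc_step.

Definition H0' F : cfun := fun p =>
  - (1/6) * (cv F p / av F p)
  + (2/9) * ((bv F p * bv F p) / (av F p * av F p))
  + (1/18) * (bv F p * cconj (Pv F) p / av F p)
  + (1/6) * Vf (lb1 F) (cconj (Pv F)) p
  - (1/9) * (cconj (Pv F) p * cconj (Pv F) p).

Lemma main_comp U F : Good U F -> (forall p, U p -> av F p <> 0) -> forall p, U p ->
  Vf (kbf F) (H0' F) p = (- 2)%C * mm F p * H0' F p.
Proof. intros HG Ha p Hp. destruct (SmC_all U F HG) as [Sk [Sck [Sm [Sn [Sa [Sb [Sc [SP [Skf Skbf]]]]]]]]].
  assert (HG' := HG). destruct HG' as [HU [HF [Hn Hr]]]. smc3 U F HU HF.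
  unfold H0' at 1.
  repeat (first [rewrite (Vf_minus U) by smc4 | rewrite (Vf_plus U) by smc4 | rewrite (Vf_div U) by smc4
     | rewrite (Vf_mult U) by smc4 | rewrite Vf_const]).
  rewrite (Ka U F HG p Hp), (Kbv U F HG p Hp), (Kcv U F HG p Hp), (KbPb U F HG p Hp), (KbLPb U F HG p Hp).
  unfold H0'. assert (Hap := Ha p Hp). field. auto. Qed.

Lemma kk_eq F : kk F = kv F.
Proof. apply functional_extensionality; intro q. unfold kk, kv, B11, B21.
  rewrite L1_eq, L2_eq, Lb1_eq. reflexivity. Qed.

Lemma ell_eq F : ell F = fun q => Ci * B11 F q.
Proof. apply functional_extensionality; intro q. unfold ell, B11.
  rewrite L1_eq, Lb1_eq. reflexivity. Qed.

Lemma Lb1k_eq F : Lb1k F = av F.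
Proof. unfold Lb1k, av. rewrite Lb1_eq, kk_eq. reflexivity. Qed.
Lemma Lb1Lb1k_eq F : Lb1Lb1k F = bv F.
Proof. unfold Lb1Lb1k, bv. rewrite Lb1_eq, Lb1k_eq. reflexivity. Qed.
Lemma Lb1Lb1Lb1k_eq F : Lb1Lb1Lb1k F = cv F.
Proof. unfold Lb1Lb1Lb1k, cv. rewrite Lb1_eq, Lb1Lb1k_eq. reflexivity. Qed.

Lemma Kb_eq F g : Kb F g = Vf (kbf F) g.
Proof. apply functional_extensionality; intro q. unfold Kb. rewrite kk_eq, Lb1_eq, Lb2_eq.
  rewrite Vf_kbf. reflexivity. Qed.

Lemma Ci_nz : Ci <> 0.
Proof. intro E. apply (f_equal snd) in E. simpl in E. lra. Qed.

Lemma PP_eq U F : Good U F -> EqC U (PP F) (Pv F).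
Proof. intros HG q Hq. assert (HG' := HG). destruct HG' as [HU [HF [Hn Hr]]].
  destruct (SmC_B U F HU HF) as [S11 [S12 [S21 S22]]]. smc3 U F HU HF.
  unfold PP. rewrite ell_eq.
  change (dz1 (fun q0 => Ci * B11 F q0) q + A1 F q * dv (fun q0 => Ci * B11 F q0) q)
    with (L1 F (fun q0 => Ci * B11 F q0) q).
  rewrite L1_eq. rewrite (Vf_mult U (l1 F) (fun _ => Ci) (B11 F)) by smc4.
  rewrite Vf_const. unfold Pv, dv. assert (Hb := Hn q Hq). assert (Hc := Ci_nz).
  field. auto. Qed.

Lemma Good_of U F : is_open U -> smooth_on F U ->
  (forall p, U p -> ell F p <> 0%C) -> (forall p, U p -> levi_rank1_at F p) -> Good U F.
Proof. intros HU Hs He Hl. split; [auto|split; [apply smooth_on_Smooth; auto|split]].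
  - intros q Hq E. apply (He q Hq). rewrite ell_eq. rewrite E. ring.
  - intros q Hq. destruct (Hl q Hq) as [_ H]. unfold h11, h12, h21, h22 in H.
    rewrite ell_eq in H. rewrite L1_eq, L2_eq, Lb1_eq, Lb2_eq in H.
    change (Vf (l1 F) (cconj (A2 F)) q - Vf (lb2 F) (A1 F) q) with (B12 F q) in H.
    change (Vf (l2 F) (cconj (A1 F)) q - Vf (lb1 F) (A2 F) q) with (B21 F q) in H.
    change (Vf (l2 F) (cconj (A2 F)) q - Vf (lb2 F) (A2 F) q) with (B22 F q) in H.
    cbv beta in H.
    transitivity (- (Ci * B11 F q * (Ci * B22 F q) - Ci * B12 F q * (Ci * B21 F q)) + B12 F q * B21 F q).
    ring [Ci2]. rewrite H. ring. Qed.

Close Scope C_scope.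
Theorem lemma8p8 (F : pt -> R) (U : pt -> Prop) :
  is_open U ->
  real_analytic_on F U ->
  smooth_on F U ->
  (forall p, U p -> ell F p <> 0%C) ->
  (forall p, U p -> levi_rank1_at F p) ->
  (forall p, U p -> Lb1k F p <> 0%C) ->
  forall p, U p ->
    Kb F (H0 F) p = ((- 2)%C * Lb1 F (cconj (kk F)) p * H0 F p)%C.
Proof. intros HU _ Hs He Hl Hk p Hp.
  assert (HG := Good_of U F HU Hs He Hl).
  assert (Ha : forall q, U q -> av F q <> 0) by (intros q Hq; rewrite <- Lb1k_eq; auto).
  assert (EH0 : EqC U (H0 F) (H0' F)).
  { intros q Hq. unfold H0, H0', Pb. rewrite Lb1k_eq, Lb1Lb1k_eq, Lb1Lb1Lb1k_eq, Lb1_eq.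
    rewrite (Vf_ext U (lb1 F) (cconj (PP F)) (cconj (Pv F)) HU) by
      (auto; intros r Hr'; unfold cconj; rewrite (PP_eq U F HG r Hr'); reflexivity).
    unfold cconj at 1 2 3 4 5. rewrite (PP_eq U F HG q Hq). reflexivity. }
  rewrite Kb_eq. rewrite (Vf_ext U (kbf F) _ _ HU EH0 p Hp). rewrite (EH0 p Hp).
  rewrite (main_comp U F HG Ha p Hp). rewrite Lb1_eq, kk_eq. reflexivity. Qed.
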